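(* Let $R$ be a finite commutative ring. Then $R$ is an avoidance ring if and only if $R$ is a principal ideal ring.
   Context: All rings are commutative with $1\neq 0$. An ideal $I$ of a ring $R$ has avoidance if whenever $I_1,\ldots,I_n$ are finitely many ideals of $R$ with $I\subseteq\bigcup_{k=1}^n I_k$, then $I\subseteq I_k$ for some $k$. A ring is an avoidance ring if every ideal of it has avoidance. *)

(* Defs.v *)
From mathcomp Require Import all_boot all_algebra.
Set Implicit Arguments. Unset Strict Implicit. Unset Printing Implicit Defensive.
Import GRing.Theory.
Local Open Scope ring_scope.

Definition is_ideal (R : finComNzRingType) (I : {set R}) : Prop :=
  0 \in I /\
  (forall x y, x \in I -> y \in I -> x + y \in I) /\
  (forall r x, x \in I -> r * x \in I).

Definition has_avoidance (R : finComNzRingType) (I : {set R}) : Prop :=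
  forall s : seq {set R}, (forall J, J \in s -> is_ideal J) ->
    I \subset \bigcup_(J <- s) J -> exists2 J, J \in s & I \subset J.

Definition avoidance_ring (R : finComNzRingType) : Prop :=
  forall I : {set R}, is_ideal I -> has_avoidance I.

Definition principal_ideal (R : finComNzRingType) (a : R) : {set R} :=
  [set r * a | r : R].

Definition principal_ideal_ring (R : finComNzRingType) : Prop :=
  forall I : {set R}, is_ideal I -> exists a : R, I = principal_ideal a.

(* Main.v *)
Require Import Defs.
From mathcomp Require Import all_boot all_algebra.
Set Implicit Arguments. Unset Strict Implicit. Unset Printing Implicit Defensive.
Import GRing.Theory.
Local Open Scope ring_scope.

Lemma mem_bigcup_seq (T : finType) (s : seq {set T}) J x :
  J \in s -> x \in J -> x \in \bigcup_(K <- s) K.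
Proof.
elim: s => [|K s IH] //= /[!inE] /orP [/eqP -> xJ|Js xJ]; rewrite big_cons inE.
  by rewrite xJ.
by rewrite IH ?orbT.
Qed.

Lemma principal_is_ideal (R : finComNzRingType) (a : R) : is_ideal (principal_ideal a).
Proof.
split; first by apply/imsetP; exists 0; rewrite ?inE ?mul0r.
split.
  move=> x y /imsetP [r _ ->] /imsetP [r' _ ->]; apply/imsetP; exists (r + r') => //.
  by rewrite mulrDl.
move=> r x /imsetP [r' _ ->]; apply/imsetP; exists (r * r') => //.
by rewrite mulrA.
Qed.

Lemma principal_self (R : finComNzRingType) (a : R) : a \in principal_ideal a.
Proof. by apply/imsetP; exists 1; rewrite ?mul1r. Qed.

Theorem proposition3p17 (R : finComNzRingType) :
  avoidance_ring R <-> principal_ideal_ring R.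
Proof.
split.
  move=> Hav I HI.
  have := Hav I HI [seq principal_ideal a | a <- enum I].
  case.
  - by move=> J /mapP [a _ ->]; apply: principal_is_ideal.
  - apply/subsetP => x xI; apply: (mem_bigcup_seq (J := principal_ideal x)).
      by apply/mapP; exists x; rewrite ?mem_enum.
    exact: principal_self.
  move=> J /mapP [a aI ->] sub; exists a; apply/eqP; rewrite eqEsubset sub /=.
  apply/subsetP => y /imsetP [r _ ->].
  rewrite mem_enum in aI.
  by case: HI => _ [_ H]; apply: H.
move=> Hp I HI s Hs sub.
have [a Ia] := Hp I HI.
have : a \in \bigcup_(J <- s) J by apply: (subsetP sub); rewrite Ia principal_self.
elim: s Hs {sub} => [|K s IH] Hs; first by rewrite big_nil inE.
rewrite big_cons inE => /orP [aK|aS].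
  exists K; first by rewrite inE eqxx.
  apply/subsetP => y; rewrite Ia => /imsetP [r _ ->].
  by have [_ [_ H]] := Hs K (mem_head _ _); apply: H.
have [|J Js IJ] := IH _ aS.
  by move=> J Js; apply: Hs; rewrite inE Js orbT.
by exists J; rewrite // inE Js orbT.
Qed.
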